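(* Let $\beta=\beta(\alpha)$ be a real function of $\alpha$ such that $c(\alpha)=\alpha-\beta(\alpha)$ satisfies $-1<c(\alpha)\le M$ for some constant $M$ and all large $\alpha$. Then, as $\alpha\to\infty$, \[ I(\alpha,\beta)\sim\left(\frac{6}{\alpha}\right)^{\frac{\alpha-\beta+1}{2}}\Gamma\!\left(\frac{\alpha-\beta+1}{2}\right), \] i.e. the ratio of the two sides tends to $1$. In particular, \[ I(\alpha,[\alpha])\sim\left(\frac{6}{\alpha}\right)^{\frac{\alpha-[\alpha]+1}{2}}\Gamma\!\left(\frac{\alpha-[\alpha]+1}{2}\right),\qquad \alpha\to\infty, \] where $[\alpha]$ denotes the greatest integer not exceeding $\alpha$.
   Context: For real $\alpha,\beta$ with $\alpha>\beta-1>0$, $I(\alpha,\beta)=\int_{-\infty}^{\infty}|\sin t|^{\alpha}|t|^{-\beta}\,dt$; $\Gamma$ denotes the gamma function. *)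

(* Defs.v *)
From Stdlib Require Import Reals Lra ClassicalEpsilon.
Open Scope R_scope.

(* Real power x^y for x >= 0, with the convention 0^y := 0 (only affects
   isolated points, irrelevant for the integrals below). *)
Definition powR (x y : R) : R := if Rle_dec x 0 then 0 else Rpower x y.

Definition ImpIntRight (f : R -> R) (a l : R) : Prop :=
  (forall x y, a < x -> x <= y -> exists _ : Riemann_integrable f x y, True) /\
  (forall eps, 0 < eps -> exists delta K, 0 < delta /\
     forall x y, a < x -> x < a + delta -> K < y ->
       exists pr : Riemann_integrable f x y, Rabs (RiemannInt pr - l) < eps).

Definition ImpIntLeft (f : R -> R) (a l : R) : Prop :=
  (forall x y, x <= y -> y < a -> exists _ : Riemann_integrable f x y, True) /\
  (forall eps, 0 < eps -> exists delta K, 0 < delta /\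
     forall x y, y < a -> a - delta < y -> x < K ->
       exists pr : Riemann_integrable f x y, Rabs (RiemannInt pr - l) < eps).

(* Improper integral over the whole line, split at the (possibly singular)
   point 0: int_{-oo}^{oo} f = int_{-oo}^0 f + int_0^{oo} f. *)
Definition ImpIntLine (f : R -> R) (l : R) : Prop :=
  exists l1 l2, ImpIntLeft f 0 l1 /\ ImpIntRight f 0 l2 /\ l = l1 + l2.

(* Gamma(s) = int_0^oo t^(s-1) e^(-t) dt  (meaningful for s > 0). *)
Definition Gamma (s : R) : R :=
  epsilon (inhabits 0)
    (fun l => ImpIntRight (fun t => powR t (s - 1) * exp (- t)) 0 l).

(* I(alpha,beta) = int_{-oo}^{oo} |sin t|^alpha |t|^(-beta) dt
   (meaningful for alpha > beta - 1 > 0). *)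
Definition I_int (alpha beta : R) : R :=
  epsilon (inhabits 0)
    (fun l => ImpIntLine (fun t => powR (Rabs (sin t)) alpha * powR (Rabs t) (- beta)) l).

Definition equiv_at_infty (f g : R -> R) : Prop :=
  forall eps, 0 < eps -> exists A, forall alpha, A < alpha ->
    Rabs (f alpha / g alpha - 1) < eps.

(* Main.v *)
Require Import Defs.
From Stdlib Require Import Reals Lra Psatz Factorial ClassicalEpsilon Classical.
From Coquelicot Require Import Coquelicot.
Open Scope R_scope.

Definition IR (f : R -> R) := forall x y, 0 < x -> x <= y -> ex_RInt f x y.
Definition NN (f : R -> R) := forall t, 0 < t -> 0 <= f t.

Lemma RInt_chasles_R (f : R -> R) a b c :
  ex_RInt f a b -> ex_RInt f b c -> RInt f a c = RInt f a b + RInt f b c.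
Proof. intros H1 H2. rewrite <- (RInt_Chasles f a b c H1 H2). reflexivity. Qed.

Lemma RInt_mono_nn f x' x y y' : IR f -> NN f -> 0 < x' -> x' <= x -> x <= y -> y <= y' ->
  RInt f x y <= RInt f x' y'.
Proof.
  intros HI HN H0 H1 H2 H3.
  rewrite (RInt_chasles_R f x' x y'); try (apply HI; lra).
  rewrite (RInt_chasles_R f x y y'); try (apply HI; lra).
  assert (0 <= RInt f x' x).
  { apply RInt_ge_0; try lra. apply HI; lra. intros t Ht; apply HN; lra. }
  assert (0 <= RInt f y y').
  { apply RInt_ge_0; try lra. apply HI; lra. intros t Ht; apply HN; lra. }
  lra.
Qed.

Lemma RInt_nn f x y : IR f -> NN f -> 0 < x -> x <= y -> 0 <= RInt f x y.
Proof. intros HI HN H0 H1. apply RInt_ge_0; auto. intros t Ht; apply HN; lra. Qed.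

Lemma imp_right_of_bound f B : IR f -> NN f ->
  (forall x y, 0 < x -> x <= y -> RInt f x y <= B) -> exists L, ImpIntRight f 0 L.
Proof.
  intros HI HN HB.
  set (E := fun v => exists x y, 0 < x /\ x <= y /\ v = RInt f x y).
  assert (Hb : bound E). { exists B. intros v [x [y [H1 [H2 ->]]]]. apply HB; auto. }
  assert (He : exists v, E v). { exists (RInt f 1 1). exists 1, 1. repeat split; lra. }
  destruct (completeness E Hb He) as [L [HL1 HL2]].
  exists L. split.
  - intros x y Hx Hxy. exists (ex_RInt_Reals_0 _ _ _ (HI x y Hx Hxy)). exact I.
  - intros eps Heps.
    assert (Hex : exists x0 y0, 0 < x0 /\ x0 <= y0 /\ L - eps < RInt f x0 y0).
    { apply NNPP. intro Hn. assert (L <= L - eps); [|lra].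
      apply HL2. intros v [x [y [H1 [H2 ->]]]].
      apply Rnot_lt_le. intro Hc. apply Hn. exists x, y. auto. }
    destruct Hex as [x0 [y0 [H1 [H2 H3]]]].
    exists x0, y0. split; auto.
    intros x y Hx Hxd HyK.
    assert (Hxy : x <= y) by lra.
    exists (ex_RInt_Reals_0 _ _ _ (HI x y Hx Hxy)).
    rewrite <- RInt_Reals.
    assert (RInt f x0 y0 <= RInt f x y) by (apply RInt_mono_nn; auto; lra).
    assert (RInt f x y <= L) by (apply HL1; exists x, y; auto).
    apply Rabs_def1; lra.
Qed.

Lemma imp_right_approx f L : IR f -> ImpIntRight f 0 L ->
  forall e, 0 < e -> exists d K, 0 < d /\ forall x y, 0 < x -> x < d -> K < y ->
    Rabs (RInt f x y - L) < e.
Proof.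
  intros HI [_ H] e He. destruct (H e He) as [d [K [Hd H']]].
  exists d, K. split; auto. intros x y Hx Hxd Hy.
  destruct (H' x y Hx ltac:(lra) Hy) as [pr Hpr]. rewrite RInt_Reals with (pr := pr). exact Hpr.
Qed.

Lemma imp_right_le f L : IR f -> NN f -> ImpIntRight f 0 L ->
  forall x y, 0 < x -> x <= y -> RInt f x y <= L.
Proof.
  intros HI HN HL x y Hx Hxy. apply Rnot_lt_le. intro Hc.
  destruct (imp_right_approx f L HI HL (RInt f x y - L) ltac:(lra)) as [d [K [Hd H]]].
  set (x' := Rmin x (d/2)). set (y' := Rmax y (K+1)).
  assert (0 < x') by (unfold x'; apply Rmin_glb_lt; lra).
  assert (x' <= x) by apply Rmin_l. assert (x' < d) by (unfold x'; generalize (Rmin_r x (d/2)); lra).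
  assert (y <= y') by apply Rmax_l. assert (K < y') by (unfold y'; generalize (Rmax_r y (K+1)); lra).
  specialize (H x' y' ltac:(lra) ltac:(lra) ltac:(lra)).
  assert (RInt f x y <= RInt f x' y') by (apply RInt_mono_nn; auto; lra).
  apply Rabs_def2 in H. lra.
Qed.

Definition EVEN (f : R -> R) := forall t, f (- t) = f t.

Lemma refl_ex f x y : EVEN f -> ex_RInt f (-y) (-x) -> ex_RInt f x y.
Proof.
  intros HE H.
  pose proof (ex_RInt_comp_lin f (-1) 0 y x) as H1.
  replace (-1 * y + 0) with (-y) in H1 by ring.
  replace (-1 * x + 0) with (-x) in H1 by ring.
  specialize (H1 H).
  apply ex_RInt_swap in H1.
  apply ex_RInt_opp in H1.
  eapply ex_RInt_ext; [|exact H1].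
  intros t _. unfold opp, scal; simpl. unfold mult; simpl.
  replace (-1 * t + 0) with (-t) by ring. rewrite HE. ring.
Qed.

Lemma refl_eq f x y : EVEN f -> ex_RInt f (-y) (-x) -> RInt f x y = RInt f (-y) (-x).
Proof.
  intros HE H.
  assert (Hxy : ex_RInt f x y) by (apply refl_ex; auto).
  destruct Hxy as [l Hl].
  destruct H as [l' Hl'].
  rewrite (is_RInt_unique f x y l Hl).
  rewrite (is_RInt_unique f (-y) (-x) l' Hl').
  pose proof (is_RInt_comp_lin f (-1) 0 y x l') as H1.
  replace (-1 * y + 0) with (-y) in H1 by ring.
  replace (-1 * x + 0) with (-x) in H1 by ring.
  specialize (H1 Hl').
  apply is_RInt_swap in H1.
  assert (H2 : is_RInt f x y (opp (opp l'))).
  { eapply is_RInt_ext; [|apply is_RInt_opp; exact H1].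
    intros t _. unfold opp, scal; simpl. unfold mult; simpl.
    replace (-1 * t + 0) with (-t) by ring. rewrite HE. ring. }
  pose proof (is_RInt_unique f x y _ H2) as E1.
  pose proof (is_RInt_unique f x y _ Hl) as E2.
  rewrite E2 in E1. rewrite E1. unfold opp; simpl. ring.
Qed.
Lemma left_right f L : EVEN f -> IR f -> ImpIntLeft f 0 L -> ImpIntRight f 0 L.
Proof.
  intros HE HI [_ H]. split.
  - intros x y Hx Hxy. exists (ex_RInt_Reals_0 _ _ _ (HI x y Hx Hxy)). exact I.
  - intros eps Heps. destruct (H eps Heps) as [d [K [Hd H']]].
    exists d, (Rmax (-K) d). split; auto. intros x y Hx Hxd Hy.
    assert (-K < y) by (generalize (Rmax_l (-K) d); lra).
    assert (d < y) by (generalize (Rmax_r (-K) d); lra).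
    destruct (H' (-y) (-x)) as [pr Hpr]; try lra.
    exists (ex_RInt_Reals_0 _ _ _ (HI x y Hx ltac:(lra))).
    rewrite <- RInt_Reals. rewrite <- RInt_Reals in Hpr.
    rewrite refl_eq with (f := f) in Hpr; auto.
    + rewrite !Ropp_involutive in Hpr. exact Hpr.
    + rewrite !Ropp_involutive. apply HI; lra.
Qed.

Lemma right_left f L : EVEN f -> IR f -> ImpIntRight f 0 L -> ImpIntLeft f 0 L.
Proof.
  intros HE HI [_ H].
  assert (HIL : forall x y, x <= y -> y < 0 -> ex_RInt f x y).
  { intros x y H1 H2. apply refl_ex; auto. apply HI; lra. }
  split.
  - intros x y Hxy Hy. exists (ex_RInt_Reals_0 _ _ _ (HIL x y Hxy Hy)). exact I.
  - intros eps Heps. destruct (H eps Heps) as [d [K [Hd H']]].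
    exists d, (Rmin (-K) (-d)). split; auto. intros x y Hy Hyd Hx.
    assert (x < -K) by (generalize (Rmin_l (-K) (-d)); lra).
    assert (x < -d) by (generalize (Rmin_r (-K) (-d)); lra).
    destruct (H' (-y) (-x)) as [pr Hpr]; try lra.
    exists (ex_RInt_Reals_0 _ _ _ (HIL x y ltac:(lra) Hy)).
    rewrite <- RInt_Reals. rewrite <- RInt_Reals in Hpr.
    rewrite refl_eq with (f := f); auto.
    apply HI; lra.
Qed.

Lemma powR_pos x y : 0 < x -> powR x y = Rpower x y.
Proof. intros H. unfold powR. destruct (Rle_dec x 0); [lra|reflexivity]. Qed.
Lemma powR_nonpos x y : x <= 0 -> powR x y = 0.
Proof. intros H. unfold powR. destruct (Rle_dec x 0); [reflexivity|lra]. Qed.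
Lemma Rpower_pos x y : 0 < Rpower x y.
Proof. unfold Rpower. apply exp_pos. Qed.
Lemma powR_nn x y : 0 <= powR x y.
Proof. unfold powR. destruct (Rle_dec x 0); [lra|]. left; apply Rpower_pos. Qed.

Lemma Rpower_cont y a : 0 < y -> continuity_pt (fun x => Rpower x a) y.
Proof.
  intros Hy. apply derivable_continuous_pt. exists (a * Rpower y (a - 1)).
  apply derivable_pt_lim_power; auto.
Qed.

Lemma powR_cont a y : 0 < a -> continuity_pt (fun x => powR x a) y.
Proof.
  intros Ha. unfold continuity_pt, continue_in, limit1_in, limit_in. simpl.
  unfold R_dist. intros eps Heps.
  destruct (Rtotal_order y 0) as [Hy|[Hy|Hy]].
  - exists (- y). split; [lra|]. intros x [_ Hx].
    rewrite !powR_nonpos; try (apply Rabs_def2 in Hx; lra). rewrite Rminus_0_r, Rabs_R0; lra.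
  - subst y. exists (Rpower eps (/ a)). split; [apply Rpower_pos|].
    intros x [_ Hx]. rewrite (powR_nonpos 0) by lra. rewrite Rminus_0_r in *.
    destruct (Rle_dec x 0) as [Hx0|Hx0].
    + rewrite powR_nonpos by lra. rewrite Rabs_R0; lra.
    + rewrite powR_pos by lra. rewrite Rabs_pos_eq by (left; apply Rpower_pos).
      rewrite Rabs_pos_eq in Hx by lra.
      replace eps with (Rpower (Rpower eps (/a)) a).
      * apply Rlt_Rpower_l; auto. lra.
      * rewrite Rpower_mult. replace (/a * a) with 1 by (field; lra). apply Rpower_1; auto.
  - destruct (Rpower_cont y a Hy eps Heps) as [d [Hd H]].
    exists (Rmin d y). split; [apply Rmin_glb_lt; lra|].
    intros x [Hx1 Hx2]. simpl in H.
    assert (Hx : 0 < x).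
    { generalize (Rmin_r d y); intro. apply Rabs_def2 in Hx2. lra. }
    rewrite !powR_pos by lra. apply H. split; auto.
    simpl. unfold R_dist. generalize (Rmin_l d y). lra.
Qed.

Definition Ff a b t := powR (Rabs (sin t)) a * powR (Rabs t) (- b).
Definition Gg s u := powR u (s - 1) * exp (- u).

Lemma Ff_even a b : EVEN (Ff a b).
Proof. intro t. unfold Ff. rewrite sin_neg, !Rabs_Ropp. reflexivity. Qed.

Lemma Ff_nn a b : NN (Ff a b).
Proof. intros t _. unfold Ff. apply Rmult_le_pos; apply powR_nn. Qed.

Lemma Gg_nn s : NN (Gg s).
Proof. intros t _. unfold Gg. apply Rmult_le_pos; [apply powR_nn| left; apply exp_pos]. Qed.

Lemma cont_ex (f g : R -> R) x y : 0 < x -> x <= y ->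
  (forall t, 0 < t -> f t = g t) -> (forall t, 0 < t -> continuity_pt g t) -> ex_RInt f x y.
Proof.
  intros Hx Hxy Hfg Hc. apply ex_RInt_ext with g.
  { intros t Ht. rewrite Rmin_left, Rmax_right in Ht by lra. symmetry; apply Hfg; lra. }
  apply (@ex_RInt_continuous R_CompleteNormedModule). intros z Hz. rewrite Rmin_left, Rmax_right in Hz by lra.
  apply continuity_pt_filterlim. apply Hc. lra.
Qed.

Lemma Ff_IR a b : 0 < a -> IR (Ff a b).
Proof.
  intros Ha x y Hx Hxy.
  apply cont_ex with (g := fun t => powR (Rabs (sin t)) a * Rpower t (- b)); auto.
  - intros t Ht. unfold Ff. rewrite (Rabs_pos_eq t) by lra. rewrite (powR_pos t) by lra. reflexivity.
  - intros t Ht. apply continuity_pt_mult.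
    + apply (continuity_pt_comp (fun t => Rabs (sin t)) (fun u => powR u a)).
      * apply (continuity_pt_comp sin Rabs). apply continuity_sin. apply Rcontinuity_abs.
      * apply powR_cont; auto.
    + apply Rpower_cont; auto.
Qed.

Lemma Gg_IR s : IR (Gg s).
Proof.
  intros x y Hx Hxy.
  apply cont_ex with (g := fun u => Rpower u (s - 1) * exp (- u)); auto.
  - intros t Ht. unfold Gg. rewrite powR_pos by lra. reflexivity.
  - intros t Ht. apply continuity_pt_mult.
    + apply Rpower_cont; auto.
    + apply (continuity_pt_comp Ropp exp). apply continuity_pt_opp, continuity_pt_id.
      apply derivable_continuous_pt. apply derivable_pt_exp.
Qed.

Lemma INR_fact_S n : INR (fact (S n)) = INR (S n) * INR (fact n).
Proof. rewrite fact_simpl, mult_INR. reflexivity. Qed.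

Lemma sin_poly t : 0 <= t <= PI ->
  t - t^3/6 + t^5/120 - t^7/5040 <= sin t <= t - t^3/6 + t^5/120 - t^7/5040 + t^9/362880.
Proof.
  intros H. destruct (SIN t ltac:(lra) ltac:(lra)) as [H1 H2].
  unfold sin_lb, sin_ub, sin_approx in *. cbn [sum_f_R0] in *.
  unfold sin_term in *. cbn [Nat.mul Nat.add] in *.
  rewrite !INR_fact_S in *. cbn [fact] in *. rewrite !S_INR in *. simpl INR in *.
  split; lra.
Qed.

Lemma PI_gt3 : 3 < PI.
Proof. generalize PI2_3_2; lra. Qed.

Lemma sin_pos01 t : 0 < t <= 1 -> 0 < sin t.
Proof. intros H. apply sin_gt_0; generalize PI_gt3; lra. Qed.

Lemma sin_div_ub t : 0 < t <= 1 -> sin t / t <= exp (- (t^2/6) + t^4/120).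
Proof.
  intros H. destruct (sin_poly t) as [_ H2]; [generalize PI_gt3; lra|].
  eapply Rle_trans; [|apply exp_ineq1_le].
  apply Rmult_le_reg_r with t; [lra|]. unfold Rdiv. rewrite Rmult_assoc, Rinv_l, Rmult_1_r by lra.
  assert (0 < t^2) by (apply pow_lt; lra).
  assert (t^2 <= 1) by (rewrite <- (pow1 2); apply pow_incr; lra).
  assert (t^9 <= 72 * t^7).
  { replace (t^9) with (t^7 * t^2) by ring. assert (0 < t^7) by (apply pow_lt; lra). nra. }
  nra.
Qed.

Lemma sin_div_lb t : 0 < t <= 1 -> exp (- (t^2/6 + t^4/30)) <= sin t / t.
Proof.
  intros H. destruct (sin_poly t) as [H1 _]; [generalize PI_gt3; lra|].
  set (y := t^2/6 + t^4/30).
  assert (Hy : 0 <= y) by (unfold y; assert (0 < t^2) by (apply pow_lt; lra);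
     assert (0 < t^4) by (apply pow_lt; lra); lra).
  rewrite exp_Ropp.
  assert (He := exp_ineq1_le y).
  assert (Hst : 1 - t^2/6 <= sin t / t).
  { apply Rmult_le_reg_r with t; [lra|]. unfold Rdiv. rewrite Rmult_assoc, Rinv_l, Rmult_1_r by lra.
    assert (t^7 <= 42 * t^5).
    { replace (t^7) with (t^5 * t^2) by ring. assert (0 < t^5) by (apply pow_lt; lra).
      assert (t^2 <= 1) by (rewrite <- (pow1 2); apply pow_incr; lra). nra. }
    assert (0 < t^5) by (apply pow_lt; lra). nra. }
  apply Rle_trans with (1 - t^2/6); auto.
  apply Rmult_le_reg_r with (exp y); [apply exp_pos|].
  rewrite Rinv_l by (apply Rgt_not_eq, exp_pos).
  assert (1 <= (1 - t^2/6) * (1 + y)).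
  { unfold y. assert (0 < t^2) by (apply pow_lt; lra).
    assert (t^2 <= 1) by (rewrite <- (pow1 2); apply pow_incr; lra).
    replace (t^4) with (t^2 * t^2) by ring. nra. }
  assert (0 <= 1 - t^2/6).
  { assert (t^2 <= 1) by (rewrite <- (pow1 2); apply pow_incr; lra). lra. }
  nra.
Qed.

Lemma sin_le_09 t : 1 <= t -> Rabs (sin t) <= 9/10 * t.
Proof.
  intros H. destruct (Rle_dec t (10/9)) as [H1|H1].
  - destruct (sin_poly t) as [Hl Hu]; [generalize PI_gt3; lra|].
    assert (0 <= sin t) by (apply sin_ge_0; generalize PI_gt3; lra).
    rewrite Rabs_pos_eq by lra.
    assert (1 <= t^2 <= 100/81) by (split; nra).
    assert (t^9 <= 72 * t^7).
    { replace (t^9) with (t^7 * t^2) by ring. assert (0 < t^7) by (apply pow_lt; lra). nra. }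
    assert (t^4 = t^2 * t^2) by ring.
    assert (t^3 = t^2 * t) by ring. assert (t^5 = t^4 * t) by ring.
    assert (0 < t^7) by (apply pow_lt; lra).
    assert (1 - t^2/6 + t^4/120 <= 9/10) by nra.
    nra.
  - generalize (SIN_bound t). intros [Ha Hb]. apply Rabs_le; lra.
Qed.

Lemma exp_mono x y : x <= y -> exp x <= exp y.
Proof. intros [H|H]; [left; apply exp_increasing; auto | subst; lra]. Qed.

Lemma Rpower_exp z a : Rpower (exp z) a = exp (a * z).
Proof. unfold Rpower. rewrite ln_exp. reflexivity. Qed.

Lemma Rpower_le_exp q z a : 0 <= a -> 0 < q -> q <= exp z -> Rpower q a <= exp (a * z).
Proof. intros Ha Hq H. rewrite <- Rpower_exp. apply Rle_Rpower_l; auto. Qed.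

Lemma Rpower_ge_exp q z a : 0 <= a -> exp z <= q -> exp (a * z) <= Rpower q a.
Proof. intros Ha H. rewrite <- Rpower_exp. apply Rle_Rpower_l; auto. split; auto. apply exp_pos. Qed.

Definition Hh c k t := Rpower t c * exp (- (k * t^2)).

Lemma Ff_small_eq a b t : 0 < t <= 1 ->
  Ff a b t = Rpower t (a - b) * Rpower (sin t / t) a.
Proof.
  intros H. unfold Ff. assert (Hs := sin_pos01 t H).
  rewrite !Rabs_pos_eq by lra. rewrite !powR_pos by lra.
  replace (sin t) with (t * (sin t / t)) at 1 by (field; lra).
  rewrite <- Rpower_mult_distr by (try lra; apply Rdiv_lt_0_compat; lra).
  unfold Rminus. rewrite Rpower_plus. ring.
Qed.

Lemma Ff_small_ub a b t : 0 <= a -> 0 < t <= 1 ->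
  Ff a b t <= Hh (a - b) (a/6) t * exp (a * t^4 / 120).
Proof.
  intros Ha H. rewrite Ff_small_eq by auto. unfold Hh.
  assert (Hs := sin_pos01 t H).
  rewrite Rmult_assoc. apply Rmult_le_compat_l; [left; apply Rpower_pos|].
  rewrite <- exp_plus.
  eapply Rle_trans. apply Rpower_le_exp; auto. apply Rdiv_lt_0_compat; lra. apply sin_div_ub; auto.
  apply exp_mono. lra.
Qed.

Lemma Ff_small_lb a b t : 0 <= a -> 0 < t <= 1 ->
  Hh (a - b) (a/6) t * exp (- (a * t^4 / 30)) <= Ff a b t.
Proof.
  intros Ha H. rewrite Ff_small_eq by auto. unfold Hh.
  rewrite Rmult_assoc. apply Rmult_le_compat_l; [left; apply Rpower_pos|].
  rewrite <- exp_plus.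
  eapply Rle_trans. 2: apply Rpower_ge_exp; auto. 2: apply sin_div_lb; auto.
  apply exp_mono. lra.
Qed.

Lemma Rpower_le_inv t c : 0 < t <= 1 -> -1 <= c -> Rpower t c <= / t.
Proof.
  intros H Hc. unfold Rpower. rewrite <- (exp_ln t) at 2 by lra. rewrite <- exp_Ropp.
  apply exp_mono. assert (ln t <= 0) by (rewrite <- ln_1; apply ln_le; lra). nra.
Qed.

Lemma Ff_mid_ub a b t d : 0 <= a -> 0 < d -> d <= t <= 1 -> -1 <= a - b ->
  Ff a b t <= / d * exp (- (a * d^2 / 8)).
Proof.
  intros Ha Hd H Hc. eapply Rle_trans. apply Ff_small_ub; auto; lra.
  unfold Hh. rewrite Rmult_assoc, <- exp_plus.
  apply Rmult_le_compat.
  - left; apply Rpower_pos.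
  - left; apply exp_pos.
  - eapply Rle_trans. apply Rpower_le_inv; auto; lra. apply Rinv_le_contravar; lra.
  - apply exp_mono.
    assert (d^2 <= t^2) by (apply pow_incr; lra).
    assert (t^2 <= 1) by (rewrite <- (pow1 2); apply pow_incr; lra).
    assert (t^4 = t^2*t^2) by ring. assert (0 <= a * (t^2 - t^4)) by (apply Rmult_le_pos; nra). assert (0 <= a * (t^2 - d^2)) by (apply Rmult_le_pos; nra). assert (0 <= a * t^2) by (apply Rmult_le_pos; nra). nra.
Qed.

Lemma Rpower_m2 t : 0 < t -> Rpower t (-2) = / t^2.
Proof. intros H. replace (-2) with (- INR 2) by (simpl; ring). rewrite Rpower_Ropp, Rpower_pow; auto. Qed.

Lemma Ff_large_ub a b t N : 0 <= N -> N <= a -> a - b - N <= -2 -> 1 <= t ->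
  Ff a b t <= Rpower (9/10) (a - N) * / t^2.
Proof.
  intros HN HaN Hc Ht. unfold Ff.
  assert (Hq : 0 <= Rpower (9/10) (a - N) * / t^2).
  { apply Rmult_le_pos; [left; apply Rpower_pos|]. left; apply Rinv_0_lt_compat, pow_lt; lra. }
  destruct (Req_dec (sin t) 0) as [Hs|Hs].
  { rewrite Hs, Rabs_R0, powR_nonpos by lra. lra. }
  assert (Hsp : 0 < Rabs (sin t)) by (apply Rabs_pos_lt; auto).
  rewrite !powR_pos by (try lra; rewrite Rabs_pos_eq; lra).
  rewrite (Rabs_pos_eq t) by lra.
  replace a with ((a - N) + N) at 1 by ring. rewrite Rpower_plus.
  assert (H1 : Rpower (Rabs (sin t)) N <= 1).
  { unfold Rpower. rewrite <- exp_0. apply exp_mono.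
    assert (ln (Rabs (sin t)) <= 0).
    { rewrite <- ln_1. apply ln_le; auto. apply Rabs_le. apply SIN_bound. }
    nra. }
  assert (H2 : Rpower (Rabs (sin t)) (a - N) <= Rpower (9/10) (a - N) * Rpower t (a - N)).
  { rewrite Rpower_mult_distr by lra. apply Rle_Rpower_l; [lra|]. split; auto. apply sin_le_09; auto. }
  assert (H3 : Rpower t (a - N) * Rpower t (- b) <= / t^2).
  { rewrite <- Rpower_plus. rewrite <- Rpower_m2 by lra. apply Rle_Rpower; lra. }
  assert (0 < Rpower (Rabs (sin t)) (a - N)) by apply Rpower_pos.
  assert (0 < Rpower (Rabs (sin t)) N) by apply Rpower_pos.
  assert (0 < Rpower t (-b)) by apply Rpower_pos.
  assert (0 < Rpower t (a - N)) by apply Rpower_pos.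
  assert (0 < Rpower (9/10) (a - N)) by apply Rpower_pos.
  apply Rle_trans with (Rpower (Rabs (sin t)) (a - N) * Rpower t (-b)).
  { rewrite (Rmult_comm (Rpower _ (a - N))), Rmult_assoc. rewrite <- (Rmult_1_l (Rpower _ (a-N) * _)) at 2.
    apply Rmult_le_compat_r; [nra|auto]. }
  apply Rle_trans with (Rpower (9/10) (a - N) * Rpower t (a - N) * Rpower t (-b)).
  { apply Rmult_le_compat_r; [lra|auto]. }
  rewrite Rmult_assoc. apply Rmult_le_compat_l; [lra|auto].
Qed.

Lemma Gg_12_lb s u : 0 < s -> 1 <= u <= 2 -> exp (-2) / 2 <= Gg s u.
Proof.
  intros Hs Hu. unfold Gg. rewrite powR_pos by lra.
  assert (Hp : 1/2 <= Rpower u (s - 1)).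
  { destruct (Rle_dec 1 s).
    - apply Rle_trans with 1; [lra|]. rewrite <- (Rpower_O u) at 1 by lra. apply Rle_Rpower; lra.
    - eapply Rle_trans; [|apply Rle_Rpower with (n := -(1)); lra].
      rewrite Rpower_Ropp, Rpower_1 by lra. apply Rmult_le_reg_r with u; [lra|].
      rewrite Rinv_l by lra. lra. }
  assert (exp (-2) <= exp (- u)) by (apply exp_mono; lra).
  assert (0 < exp (-2)) by apply exp_pos. nra.
Qed.

Lemma sum_ge_last (f : nat -> R) n : (forall k, 0 <= f k) -> f n <= sum_f_R0 f n.
Proof.
  intros H. destruct n. simpl; lra. rewrite tech5. generalize (cond_pos_sum f n H). lra.
Qed.

Lemma pow_le_exp u n : 0 <= u -> u ^ n <= INR (fact n) * 2 ^ n * exp (u / 2).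
Proof.
  intros Hu. assert (H := exp_ge_taylor (u/2) n ltac:(lra)).
  assert (H2 := sum_ge_last (fun k => (u/2)^k / INR (fact k)) n).
  assert (Hf : 0 < INR (fact n)) by (apply lt_0_INR, lt_O_fact).
  assert ((u/2)^n / INR (fact n) <= exp (u/2)).
  { eapply Rle_trans; [apply H2|exact H]. intro k. apply Rmult_le_pos. apply pow_le; lra.
    left; apply Rinv_0_lt_compat, lt_0_INR, lt_O_fact. }
  unfold Rdiv in H0. rewrite Rpow_mult_distr in H0.
  assert (0 < 2^n) by (apply pow_lt; lra).
  rewrite pow_inv in H0.
  apply Rmult_le_compat_l with (r := INR (fact n) * 2^n) in H0; [|nra].
  replace (INR (fact n) * 2 ^ n * (u ^ n * / 2 ^ n * / INR (fact n))) with (u^n) in H0 by (field; lra).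
  exact H0.
Qed.

Lemma Gg_large_ub s u n : 1 <= u -> s - 1 <= INR n ->
  Gg s u <= INR (fact n) * 2 ^ n * exp (- (u / 2)).
Proof.
  intros Hu Hn. unfold Gg. rewrite powR_pos by lra.
  assert (H0 : Rpower u (s - 1) <= u ^ n).
  { rewrite <- Rpower_pow by lra. apply Rle_Rpower; lra. }
  assert (H1 := pow_le_exp u n ltac:(lra)).
  replace (exp (- (u / 2))) with (exp (u/2) * exp (- u)).
  2: { rewrite <- exp_plus. f_equal. lra. }
  assert (0 < exp (- u)) by apply exp_pos.
  rewrite <- Rmult_assoc. apply Rmult_le_compat_r; lra.
Qed.

Lemma Gg_small_ub s u : 0 < u -> Gg s u <= Rpower u (s - 1).
Proof.
  intros Hu. unfold Gg. rewrite powR_pos by lra.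
  assert (exp (- u) <= 1) by (rewrite <- exp_0; apply exp_mono; lra).
  assert (0 < Rpower u (s-1)) by apply Rpower_pos. nra.
Qed.

Lemma cont_exd (f : R -> R) x : ex_derive f x -> continuous f x.
Proof. apply (@ex_derive_continuous R_AbsRing R_NormedModule). Qed.

Lemma ex_RInt_Kmul (g : R -> R) K x y : ex_RInt g x y -> ex_RInt (fun t => K * g t) x y.
Proof.
  intros H. apply (ex_RInt_scal g x y K) in H.
  eapply ex_RInt_ext; [|exact H]. intros t _. reflexivity.
Qed.

Lemma RInt_Kmul (g : R -> R) K x y : ex_RInt g x y -> RInt (fun t => K * g t) x y = K * RInt g x y.
Proof.
  intros H. transitivity (scal K (RInt g x y)); [|reflexivity].
  rewrite <- RInt_scal by exact H. apply RInt_ext. intros t _. reflexivity.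
Qed.

Lemma RInt_le_K f g K x y : x <= y -> ex_RInt f x y -> ex_RInt g x y ->
  (forall t, x < t < y -> f t <= K * g t) -> RInt f x y <= K * RInt g x y.
Proof.
  intros Hxy Hf Hg H. rewrite <- RInt_Kmul by auto.
  apply RInt_le; auto. apply ex_RInt_Kmul; auto.
Qed.

Lemma RInt_ge_K f g K x y : x <= y -> ex_RInt f x y -> ex_RInt g x y ->
  (forall t, x < t < y -> K * g t <= f t) -> K * RInt g x y <= RInt f x y.
Proof.
  intros Hxy Hf Hg H. rewrite <- RInt_Kmul by auto.
  apply RInt_le; auto. apply ex_RInt_Kmul; auto.
Qed.

Lemma RInt_le_const f K x y : x <= y -> ex_RInt f x y ->
  (forall t, x < t < y -> f t <= K) -> RInt f x y <= K * (y - x).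
Proof.
  intros Hxy Hf H.
  assert (E : RInt (fun _ => K) x y = K * (y - x)).
  { rewrite RInt_const. unfold scal; simpl; unfold mult; simpl; ring. }
  rewrite <- E. apply RInt_le; auto. apply ex_RInt_const.
Qed.

Lemma RInt_ge_const f K x y : x <= y -> ex_RInt f x y ->
  (forall t, x < t < y -> K <= f t) -> K * (y - x) <= RInt f x y.
Proof.
  intros Hxy Hf H.
  assert (E : RInt (fun _ => K) x y = K * (y - x)).
  { rewrite RInt_const. unfold scal; simpl; unfold mult; simpl; ring. }
  rewrite <- E. apply RInt_le; auto. apply ex_RInt_const.
Qed.

Lemma Hh_IR c k : IR (Hh c k).
Proof.
  intros x y Hx Hxy. apply cont_ex with (g := Hh c k); auto.
  intros t Ht. unfold Hh. apply continuity_pt_mult. apply Rpower_cont; auto.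
  apply (continuity_pt_comp (fun t => - (k * t^2)) exp).
  - apply continuity_pt_opp. apply continuity_pt_mult. apply continuity_pt_const. intros u v; reflexivity.
    apply derivable_continuous_pt. apply derivable_pt_pow.
  - apply derivable_continuous_pt. apply derivable_pt_exp.
Qed.

Lemma Hh_nn c k : NN (Hh c k).
Proof. intros t _. unfold Hh. apply Rmult_le_pos; left; [apply Rpower_pos|apply exp_pos]. Qed.

Lemma gauss_subst s k x y : 0 < s -> 0 < k -> 0 < x -> x <= y ->
  RInt (Hh (2*s-1) k) x y = / (2 * Rpower k s) * RInt (Gg s) (k*x^2) (k*y^2).
Proof.
  intros Hs Hk Hx Hxy.
  set (Gp := fun u => Rpower u (s - 1) * exp (- u)).
  assert (Hc : forall u, 0 < u -> continuity_pt Gp u).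
  { intros u Hu. unfold Gp. apply continuity_pt_mult. apply Rpower_cont; auto.
    apply (continuity_pt_comp Ropp exp). apply continuity_pt_opp, continuity_pt_id.
    apply derivable_continuous_pt. apply derivable_pt_exp. }
  assert (Hpos : forall t, Rmin x y <= t <= Rmax x y -> 0 < t).
  { intros t Ht. rewrite Rmin_left in Ht by lra. lra. }
  assert (H1 : forall t, Rmin x y <= t <= Rmax x y -> continuous Gp (k * t^2)).
  { intros t Ht. apply continuity_pt_filterlim. apply Hc.
    specialize (Hpos t Ht). assert (0 < t^2) by (apply pow_lt; lra). nra. }
  assert (H2 : forall t, Rmin x y <= t <= Rmax x y ->
     is_derive (fun t => k * t^2) t (2 * k * t) /\ continuous (fun t => 2 * k * t) t).
  { intros t Ht. split.
    - auto_derive; auto. ring.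
    - apply cont_exd. auto_derive; auto. }
  assert (Hcomp : RInt (fun t => (2*k*t) * Gp (k*t^2)) x y = RInt Gp (k*x^2) (k*y^2)).
  { exact (RInt_comp Gp (fun t => k * t^2) (fun t => 2 * k * t) x y H1 H2). }
  assert (HG : RInt (Gg s) (k*x^2) (k*y^2) = RInt Gp (k*x^2) (k*y^2)).
  { apply RInt_ext. intros u Hu.
    assert (0 < k * x^2) by (assert (0 < x^2) by (apply pow_lt; lra); nra).
    assert (0 < u) by (generalize (Rmin_glb_lt _ _ _ H H); intro; destruct Hu as [Hu _];
      generalize (Rmin_l (k*x^2) (k*y^2)) (Rmin_r (k*x^2) (k*y^2)); intros;
      assert (k*x^2 <= k*y^2) by (apply Rmult_le_compat_l; [lra| apply pow_incr; lra]);
      rewrite Rmin_left in Hu by lra; lra).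
    unfold Gg, Gp. rewrite powR_pos by lra. reflexivity. }
  rewrite HG, <- Hcomp.
  assert (HK : 0 < 2 * Rpower k s) by (generalize (Rpower_pos k s); lra).
  apply Rmult_eq_reg_l with (2 * Rpower k s); [|lra].
  rewrite <- Rmult_assoc, Rinv_r, Rmult_1_l by lra.
  rewrite <- RInt_Kmul by (apply Hh_IR; auto).
  symmetry. apply RInt_ext. intros t Ht. rewrite Rmin_left, Rmax_right in Ht by lra.
  assert (Ht0 : 0 < t) by lra.
  unfold Gp, Hh, Rpower.
  assert (E : ln (k * t^2) = ln k + 2 * ln t).
  { rewrite ln_mult by (try lra; apply pow_lt; lra). rewrite ln_pow by lra. simpl INR. ring. }
  rewrite E.
  replace (2 * k * t) with (2 * exp (ln k) * exp (ln t)) by (rewrite !exp_ln; lra).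
  replace (s * ln k) with (ln k + (s - 1) * ln k) by ring.
  replace ((2 * s - 1) * ln t) with (ln t + 2 * (s - 1) * ln t) by ring.
  replace ((s - 1) * (ln k + 2 * ln t)) with ((s - 1) * ln k + 2 * (s - 1) * ln t) by ring.
  rewrite !exp_plus. match goal with |- ?a = ?b => change (@eq R a b) end. ring.
Qed.

Lemma int_pow_small s x : 0 < s -> 0 < x <= 1 -> RInt (fun u => Rpower u (s - 1)) x 1 <= / s.
Proof.
  intros Hs Hx.
  assert (H : is_RInt (fun u => Rpower u (s - 1)) x 1
             (minus ((fun u => / s * Rpower u s) 1) ((fun u => / s * Rpower u s) x))).
  { apply (@is_RInt_derive R_CompleteNormedModule (fun u => / s * Rpower u s) (fun u => Rpower u (s - 1))).
    - intros t Ht. rewrite Rmin_left, Rmax_right in Ht by lra.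
      apply is_derive_Reals.
      replace (Rpower t (s - 1)) with (/ s * (s * Rpower t (s - 1))) by (field; lra).
      apply derivable_pt_lim_scal. apply derivable_pt_lim_power. lra.
    - intros t Ht. rewrite Rmin_left, Rmax_right in Ht by lra.
      apply continuity_pt_filterlim. apply Rpower_cont. lra. }
  rewrite (is_RInt_unique _ _ _ _ H). unfold minus, plus, opp; simpl.
  replace (Rpower 1 s) with 1 by (unfold Rpower; rewrite ln_1, Rmult_0_r, exp_0; reflexivity). generalize (Rpower_pos x s). intro.
  assert (0 < / s) by (apply Rinv_0_lt_compat; lra). nra.
Qed.

Lemma int_exp_tail X Y : X <= Y -> RInt (fun u => exp (- (u / 2))) X Y <= 2 * exp (- (X / 2)).
Proof.
  intros H.
  assert (H1 : is_RInt (fun u => exp (- (u / 2))) X Y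
             (minus ((fun u => -2 * exp (- (u / 2))) Y) ((fun u => -2 * exp (- (u / 2))) X))).
  { apply (@is_RInt_derive R_CompleteNormedModule (fun u => -2 * exp (- (u / 2))) (fun u => exp (- (u / 2)))).
    - intros t Ht. auto_derive; auto. match goal with |- ?a = ?b => change (@eq R a b) end. unfold Rdiv. set (e := exp _). lra.
    - intros t Ht. apply cont_exd. auto_derive; auto. }
  rewrite (is_RInt_unique _ _ _ _ H1). unfold minus, plus, opp; simpl.
  generalize (exp_pos (- (Y / 2))). lra.
Qed.

Lemma int_inv_sq Y : 1 <= Y -> RInt (fun t => / t^2) 1 Y <= 1.
Proof.
  intros H.
  assert (H1 : is_RInt (fun t => / t^2) 1 Y
             (minus ((fun t => - / t) Y) ((fun t => - / t) 1))).
  { apply (@is_RInt_derive R_CompleteNormedModule (fun t => - / t) (fun t => / t^2)).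
    - intros t Ht. rewrite Rmin_left, Rmax_right in Ht by lra. auto_derive. lra. match goal with |- ?a = ?b => change (@eq R a b) end. field. lra.
    - intros t Ht. rewrite Rmin_left, Rmax_right in Ht by lra.
      apply cont_exd. auto_derive. assert (0 < t^2) by (apply pow_lt; lra). lra. }
  rewrite (is_RInt_unique _ _ _ _ H1). unfold minus, plus, opp; simpl.
  assert (0 < / Y) by (apply Rinv_0_lt_compat; lra). lra.
Qed.

Definition Cn n := INR (fact n) * 2 ^ n.

Lemma Cn_pos n : 0 < Cn n.
Proof. unfold Cn. apply Rmult_lt_0_compat. apply lt_0_INR, lt_O_fact. apply pow_lt; lra. Qed.

Lemma expm_IR : forall x y, ex_RInt (fun u => exp (- (u / 2))) x y.
Proof.
  intros x y. apply (@ex_RInt_continuous R_CompleteNormedModule). intros z _.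
  apply cont_exd. auto_derive. auto.
Qed.

Lemma Gg_tail s n X Y : s - 1 <= INR n -> 1 <= X -> X <= Y ->
  RInt (Gg s) X Y <= Cn n * (2 * exp (- (X / 2))).
Proof.
  intros Hn HX HXY. eapply Rle_trans.
  - apply RInt_le_K with (g := fun u => exp (- (u / 2))) (K := Cn n); auto.
    apply Gg_IR; lra. apply expm_IR.
    intros t Ht. unfold Cn. apply Gg_large_ub; auto; lra.
  - apply Rmult_le_compat_l. left; apply Cn_pos. apply int_exp_tail; auto.
Qed.

Lemma pow_IR s : IR (fun u => Rpower u (s - 1)).
Proof. intros x y Hx Hxy. apply cont_ex with (g := fun u => Rpower u (s - 1)); auto.
  intros t Ht. apply Rpower_cont; auto. Qed.

Lemma Gg_bound s n x y : 0 < s -> s - 1 <= INR n -> 0 < x -> x <= y ->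
  RInt (Gg s) x y <= / s + Cn n * 2.
Proof.
  intros Hs Hn Hx Hxy.
  set (x' := Rmin x 1). set (y' := Rmax y 1).
  assert (0 < x') by (unfold x'; apply Rmin_glb_lt; lra).
  assert (x' <= x) by apply Rmin_l. assert (x' <= 1) by apply Rmin_r.
  assert (y <= y') by apply Rmax_l. assert (1 <= y') by apply Rmax_r.
  eapply Rle_trans. apply (RInt_mono_nn _ x' x y y'); auto. apply Gg_IR. apply Gg_nn.
  rewrite (RInt_chasles_R _ x' 1 y') by (apply Gg_IR; lra).
  assert (RInt (Gg s) x' 1 <= / s).
  { eapply Rle_trans; [|apply (int_pow_small s x'); auto].
    apply RInt_le; auto. apply Gg_IR; lra. apply pow_IR; lra.
    intros t Ht. apply Gg_small_ub; lra. }
  assert (RInt (Gg s) 1 y' <= Cn n * 2).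
  { eapply Rle_trans. apply Gg_tail; eauto; lra.
    apply Rmult_le_compat_l. left; apply Cn_pos.
    assert (exp (- (1/2)) <= 1) by (apply Rle_trans with (exp 0); [apply exp_mono; lra | rewrite exp_0; lra]). lra. }
  lra.
Qed.

Lemma nat_above r : exists n : nat, r <= INR n.
Proof. destruct (INR_unbounded r) as [n Hn]. exists n. lra. Qed.

Lemma Gamma_spec s : 0 < s -> ImpIntRight (Gg s) 0 (Gamma s).
Proof.
  intros Hs. destruct (nat_above (s - 1)) as [n Hn].
  unfold Gamma. apply epsilon_spec.
  apply imp_right_of_bound with (B := / s + Cn n * 2).
  apply Gg_IR. apply Gg_nn. intros x y Hx Hxy. apply Gg_bound; auto.
Qed.

Lemma Gamma_ge s x y : 0 < s -> 0 < x -> x <= y -> RInt (Gg s) x y <= Gamma s.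
Proof.
  intros Hs Hx Hxy. apply (imp_right_le (Gg s)); auto. apply Gg_IR. apply Gg_nn. apply Gamma_spec; auto.
Qed.

Lemma Gamma_lb s : 0 < s -> exp (-2) / 2 <= Gamma s.
Proof.
  intros Hs. eapply Rle_trans; [|apply (Gamma_ge s 1 2); lra].
  eapply Rle_trans; [|apply RInt_ge_const with (K := exp (-2) / 2); [lra|apply Gg_IR; lra|]].
  - lra.
  - intros t Ht. apply Gg_12_lb; auto; lra.
Qed.

Lemma Gamma_below s n X eta : 0 < s -> s - 1 <= INR n -> 1 <= X -> 0 < eta ->
  exists x0, 0 < x0 /\ forall x, 0 < x -> x < x0 ->
    Gamma s - eta - Cn n * (2 * exp (- (X / 2))) <= RInt (Gg s) x X.
Proof.
  intros Hs Hn HX Heta.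
  destruct (imp_right_approx (Gg s) (Gamma s) (Gg_IR s) (Gamma_spec s Hs) eta Heta) as [d [K [Hd H]]].
  exists (Rmin d 1). split. apply Rmin_glb_lt; lra.
  intros x Hx Hxd.
  assert (x < d) by (generalize (Rmin_l d 1); lra). assert (x < 1) by (generalize (Rmin_r d 1); lra).
  set (y := Rmax (K + 1) X).
  assert (K < y) by (unfold y; generalize (Rmax_l (K+1) X); lra).
  assert (X <= y) by (unfold y; apply Rmax_r).
  specialize (H x y Hx ltac:(lra) ltac:(lra)).
  rewrite (RInt_chasles_R _ x X y) in H by (apply Gg_IR; lra).
  assert (RInt (Gg s) X y <= Cn n * (2 * exp (- (X / 2)))) by (apply Gg_tail; auto).
  apply Rabs_def2 in H. lra.
Qed.

Lemma imp_right_ub f L U : IR f -> ImpIntRight f 0 L ->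
  (forall x y, 0 < x -> x <= y -> RInt f x y <= U) -> L <= U.
Proof.
  intros HI HL HU. apply Rnot_lt_le. intro Hc.
  destruct (imp_right_approx f L HI HL (L - U) ltac:(lra)) as [d [K [Hd H]]].
  set (y := Rmax (K + 1) d).
  assert (K < y) by (unfold y; generalize (Rmax_l (K+1) d); lra).
  assert (d <= y) by (unfold y; apply Rmax_r).
  specialize (H (d/2) y ltac:(lra) ltac:(lra) ltac:(lra)).
  specialize (HU (d/2) y ltac:(lra) ltac:(lra)).
  apply Rabs_def2 in H. lra.
Qed.

Lemma le_eps A B : (forall eta, 0 < eta -> A - eta <= B) -> A <= B.
Proof.
  intros H. apply Rnot_lt_le. intro Hc. specialize (H ((A - B)/2) ltac:(lra)). lra.
Qed.


Lemma invsq_ex y : 1 <= y -> ex_RInt (fun t => / t^2) 1 y.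
Proof.
  intros Hy. apply (@ex_RInt_continuous R_CompleteNormedModule). intros z Hz.
  rewrite Rmin_left, Rmax_right in Hz by lra.
  apply cont_exd. auto_derive. assert (0 < z^2) by (apply pow_lt; lra). lra.
Qed.

Section Bounds.
Variables (a b N d : R).
Hypothesis Ha : 0 < a.
Hypothesis Hc1 : -1 < a - b.
Hypothesis HN0 : 0 <= N.
Hypothesis HNa : N <= a.
Hypothesis HNc : a - b - N <= -2.
Hypothesis Hd : 0 < d <= 1.

Let s := (a - b + 1) / 2.
Let k := a / 6.
Let P := / (2 * Rpower k s).

Lemma s_pos : 0 < s. Proof. unfold s. lra. Qed.
Lemma k_pos : 0 < k. Proof. unfold k. lra. Qed.
Lemma P_pos : 0 < P.
Proof. unfold P. apply Rinv_0_lt_compat. generalize (Rpower_pos k s). lra. Qed.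
Lemma c_eq : a - b = 2 * s - 1. Proof. unfold s. field. Qed.

Definition UpB := exp (a * d^4 / 120) * P * Gamma s + / d * exp (- (a * d^2 / 8)) + Rpower (9/10) (a - N).

Lemma Ff_int_ub x y : 0 < x -> x <= y -> RInt (Ff a b) x y <= UpB.
Proof.
  intros Hx Hxy.
  assert (HI := Ff_IR a b Ha).
  set (x' := Rmin x d). set (y' := Rmax y 1).
  assert (0 < x') by (unfold x'; apply Rmin_glb_lt; lra).
  assert (x' <= x) by apply Rmin_l. assert (x' <= d) by apply Rmin_r.
  assert (y <= y') by apply Rmax_l. assert (1 <= y') by apply Rmax_r.
  eapply Rle_trans. apply (RInt_mono_nn _ x' x y y'); auto. apply Ff_nn.
  rewrite (RInt_chasles_R _ x' d y') by (apply HI; lra).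
  rewrite (RInt_chasles_R _ d 1 y') by (apply HI; lra).
  assert (B1 : RInt (Ff a b) x' d <= exp (a * d^4 / 120) * P * Gamma s).
  { eapply Rle_trans.
    - apply RInt_le_K with (g := Hh (a - b) k) (K := exp (a * d^4 / 120)); [lra|apply HI; lra|apply Hh_IR; lra|].
      intros t Ht. eapply Rle_trans. apply Ff_small_ub; lra.
      rewrite (Rmult_comm (exp (a * d^4 / 120))). apply Rmult_le_compat_l. apply Hh_nn; lra.
      apply exp_mono. assert (t^4 <= d^4) by (apply pow_incr; lra). nra.
    - rewrite Rmult_assoc. apply Rmult_le_compat_l. left; apply exp_pos.
      rewrite c_eq. rewrite gauss_subst; auto using s_pos, k_pos.
      apply Rmult_le_compat_l. left; apply P_pos.
      apply Gamma_ge. apply s_pos. generalize k_pos; intro; assert (0 < x'^2) by (apply pow_lt; lra); nra.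
      apply Rmult_le_compat_l. left; apply k_pos. apply pow_incr; lra. }
  assert (B2 : RInt (Ff a b) d 1 <= / d * exp (- (a * d^2 / 8))).
  { eapply Rle_trans. apply RInt_le_const with (K := / d * exp (- (a * d^2 / 8))); try lra. apply HI; lra.
    intros t Ht. apply Ff_mid_ub; lra.
    assert (0 < / d * exp (- (a * d ^ 2 / 8))).
    { apply Rmult_lt_0_compat. apply Rinv_0_lt_compat; lra. apply exp_pos. }
    nra. }
  assert (B3 : RInt (Ff a b) 1 y' <= Rpower (9/10) (a - N)).
  { eapply Rle_trans. apply RInt_le_K with (g := fun t => / t^2) (K := Rpower (9/10) (a - N)); [lra|apply HI; lra|apply invsq_ex; lra|].
    intros t Ht. apply Ff_large_ub; lra.
    generalize (int_inv_sq y' ltac:(lra)). generalize (Rpower_pos (9/10) (a - N)). intros. nra. }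
  unfold UpB. lra.
Qed.

Lemma Ff_exists : exists L, ImpIntRight (Ff a b) 0 L.
Proof.
  apply imp_right_of_bound with (B := UpB). apply Ff_IR; auto. apply Ff_nn.
  apply Ff_int_ub.
Qed.

Lemma Ff_L_ub L : ImpIntRight (Ff a b) 0 L -> L <= UpB.
Proof. intros H. apply (imp_right_ub (Ff a b) L); auto. apply Ff_IR; auto. apply Ff_int_ub. Qed.

Lemma Ff_L_lb n L : s - 1 <= INR n -> 1 <= k * d^2 -> ImpIntRight (Ff a b) 0 L ->
  exp (- (a * d^4 / 30)) * P * (Gamma s - Cn n * (2 * exp (- (k * d^2 / 2)))) <= L.
Proof.
  intros Hn HX HL. assert (HI := Ff_IR a b Ha).
  apply le_eps. intros eta Heta.
  set (E := exp (- (a * d^4 / 30))).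
  assert (HE : 0 < E) by apply exp_pos.
  assert (HP := P_pos).
  destruct (Gamma_below s n (k * d^2) (eta / (E * P)) s_pos Hn HX) as [x0 [Hx0 Hb]].
  { apply Rdiv_lt_0_compat; auto. nra. }
  assert (Hk := k_pos).
  set (x := Rmin d (x0 / (2 * (k + 1)))).
  assert (Hx : 0 < x) by (unfold x; apply Rmin_glb_lt; try lra; apply Rdiv_lt_0_compat; lra).
  assert (Hxd : x <= d) by apply Rmin_l.
  assert (Hxx : x <= x0 / (2 * (k + 1))) by apply Rmin_r.
  assert (Hkx : k * x^2 < x0).
  { assert (x^2 <= x) by (simpl; nra).
    assert (x * (2 * (k + 1)) <= x0).
    { apply Rmult_le_compat_r with (r := 2 * (k+1)) in Hxx; [|lra].
      unfold Rdiv in Hxx. rewrite Rmult_assoc, Rinv_l, Rmult_1_r in Hxx by lra. lra. }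
    nra. }
  assert (Hkx0 : 0 < k * x^2) by (assert (0 < x^2) by (apply pow_lt; lra); nra).
  specialize (Hb (k * x^2) Hkx0 Hkx).
  assert (HL1 : RInt (Ff a b) x d <= L) by (apply (imp_right_le _ L); auto; apply Ff_nn).
  assert (HL2 : E * RInt (Hh (a - b) k) x d <= RInt (Ff a b) x d).
  { apply RInt_ge_K; [lra|apply HI; lra|apply Hh_IR; lra|].
    intros t Ht. eapply Rle_trans; [|apply Ff_small_lb; lra].
    rewrite Rmult_comm. apply Rmult_le_compat_l. unfold Hh.
    left; apply Rmult_lt_0_compat; [apply Rpower_pos|apply exp_pos].
    unfold E. apply exp_mono. assert (t^4 <= d^4) by (apply pow_incr; lra). nra. }
  rewrite c_eq in HL2. rewrite gauss_subst in HL2; auto using s_pos.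
  fold P in HL2.
  assert (E * P * (Gamma s - eta / (E * P) - Cn n * (2 * exp (- (k * d ^ 2 / 2)))) <=
          E * (P * RInt (Gg s) (k * x ^ 2) (k * d ^ 2))).
  { assert (0 < E * P) by nra. rewrite <- (Rmult_assoc E P). apply Rmult_le_compat_l; lra. }
  replace (E * P * (Gamma s - eta / (E * P) - Cn n * (2 * exp (- (k * d ^ 2 / 2)))))
    with (E * P * (Gamma s - Cn n * (2 * exp (- (k * d ^ 2 / 2)))) - eta) in H by (field; lra).
  lra.
Qed.

End Bounds.

Lemma exp_le_inv x : 0 < x -> exp (- x) <= / x.
Proof.
  intros Hx. rewrite exp_Ropp. apply Rinv_le_contravar; auto.
  generalize (exp_ineq1_le x). lra.
Qed.

Lemma exp_le_taylor_inv r w m : 0 < r -> 0 < w ->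
  exp (- (r * w)) <= INR (fact m) / (r * w) ^ m.
Proof.
  intros Hr Hw. rewrite exp_Ropp.
  assert (Hrw : 0 < r * w) by nra.
  assert (H := exp_ge_taylor (r * w) m ltac:(lra)).
  assert (H2 := sum_ge_last (fun k => (r * w)^k / INR (fact k)) m).
  assert (Hf : 0 < INR (fact m)) by (apply lt_0_INR, lt_O_fact).
  assert (Hp : 0 < (r * w)^m) by (apply pow_lt; auto).
  assert (H3 : (r * w)^m / INR (fact m) <= exp (r * w)).
  { eapply Rle_trans; [apply H2|exact H]. intro k. apply Rmult_le_pos. apply pow_le; lra.
    left; apply Rinv_0_lt_compat, lt_0_INR, lt_O_fact. }
  assert (0 < (r * w)^m / INR (fact m)) by (apply Rdiv_lt_0_compat; auto).
  apply Rinv_le_contravar in H3; auto.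
  replace (INR (fact m) / (r * w) ^ m) with (/ ((r * w)^m / INR (fact m))) by (field; lra).
  exact H3.
Qed.

Lemma poly_exp_lim p r eps : 0 < r -> 0 < eps ->
  exists W, 1 <= W /\ forall w, W <= w -> Rpower w p * exp (- (r * w)) <= eps.
Proof.
  intros Hr He.
  destruct (INR_unbounded (p + 1)) as [m Hm].
  set (K := INR (fact m) / r ^ m).
  assert (HK : 0 < K) by (apply Rdiv_lt_0_compat; [apply lt_0_INR, lt_O_fact| apply pow_lt; auto]).
  exists (Rmax 1 (K / eps)). split; [apply Rmax_l|].
  intros w Hw.
  assert (Hw1 : 1 <= w) by (generalize (Rmax_l 1 (K/eps)); lra).
  assert (Hw2 : K / eps <= w) by (generalize (Rmax_r 1 (K/eps)); lra).
  assert (H1 : Rpower w p <= w ^ m / w).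
  { replace (w ^ m / w) with (Rpower w (INR m - 1)).
    - apply Rle_Rpower; lra.
    - unfold Rminus. rewrite Rpower_plus, Rpower_pow by lra. rewrite Rpower_Ropp, Rpower_1 by lra. reflexivity. }
  assert (H2 := exp_le_taylor_inv r w m Hr ltac:(lra)).
  assert (Hwm : 0 < w ^ m) by (apply pow_lt; lra).
  assert (0 < exp (- (r * w))) by apply exp_pos.
  eapply Rle_trans. apply Rmult_le_compat; [left; apply Rpower_pos|lra|exact H1|exact H2].
  rewrite Rpow_mult_distr.
  replace (w ^ m / w * (INR (fact m) / (r ^ m * w ^ m))) with (K / w).
  2: { unfold K. field. assert (r ^ m <> 0) by (apply pow_nonzero; lra). assert (w ^ m <> 0) by lra. repeat split; auto; lra. }
  apply Rmult_le_reg_r with (w / eps). apply Rdiv_lt_0_compat; lra.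
  replace (K / w * (w / eps)) with (K / eps) by (field; lra).
  replace (eps * (w / eps)) with w by (field; lra). lra.
Qed.

Lemma Rpower_inv x y : 0 < x -> Rpower (/ x) y = / Rpower x y.
Proof. intros Hx. unfold Rpower. rewrite ln_Rinv by auto. rewrite <- exp_Ropp. f_equal. ring. Qed.

Lemma ratio_bound Lo Up l1 l2 g eps : 0 < g -> Lo <= l1 <= Up -> Lo <= l2 <= Up ->
  1 - eps < 2 * Lo / g -> 2 * Up / g < 1 + eps -> Rabs ((l1 + l2) / g - 1) < eps.
Proof.
  intros Hg H1 H2 H3 H4.
  assert (2 * Lo / g <= (l1 + l2) / g) by (apply Rmult_le_compat_r; [left; apply Rinv_0_lt_compat; auto| lra]).
  assert ((l1 + l2) / g <= 2 * Up / g) by (apply Rmult_le_compat_r; [left; apply Rinv_0_lt_compat; auto| lra]).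
  apply Rabs_def1; lra.
Qed.

Lemma I_int_spec a b N : 0 < a -> -1 < a - b -> 0 <= N -> N <= a -> a - b - N <= -2 ->
  exists l1 l2, ImpIntRight (Ff a b) 0 l1 /\ ImpIntRight (Ff a b) 0 l2 /\ I_int a b = l1 + l2.
Proof.
  intros Ha Hc HN0 HNa HNc.
  destruct (Ff_exists a b N 1 Ha Hc HN0 HNa HNc ltac:(lra)) as [L HL].
  assert (Hex : exists l, ImpIntLine (Ff a b) l).
  { exists (L + L). exists L, L. split; [|split; auto]. apply right_left; auto.
    apply Ff_even. apply Ff_IR; auto. }
  assert (H := epsilon_spec (inhabits 0) _ Hex).
  unfold I_int. fold (Ff a b).
  destruct H as [l1 [l2 [H1 [H2 H3]]]].
  exists l1, l2. split; [|split; auto].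
  apply left_right; auto. apply Ff_even. apply Ff_IR; auto.
Qed.

Definition r9 := - ln (9/10).
Lemma r9_pos : 0 < r9.
Proof. unfold r9. assert (ln (9/10) < ln 1) by (apply ln_increasing; lra). rewrite ln_1 in H. lra. Qed.

Lemma R9_bound a N : Rpower (9/10) (a - N) = exp (r9 * N) * exp (- (r9 * a)).
Proof. unfold Rpower, r9. rewrite <- exp_plus. f_equal. ring. Qed.

Lemma exp_small_ub x : 0 <= x <= 1/2 -> exp x <= 1 + 2 * x.
Proof.
  intros Hx. assert (H := exp_ineq1_le (- x)).
  assert (Hp : 0 < exp x) by apply exp_pos.
  rewrite exp_Ropp in H.
  assert (1 - x <= / exp x) by lra.
  assert ((1 - x) * exp x <= 1).
  { apply Rmult_le_compat_r with (r := exp x) in H0; [|lra]. rewrite Rinv_l in H0 by lra. lra. }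
  nra.
Qed.

Lemma core a b M S n N e w :
  0 < e <= 1 -> -1 < a - b <= M -> (M + 1) / 2 <= S -> 1 <= S -> S - 1 <= INR n ->
  N = Rmax (M + 2) 0 -> N <= a -> 6 <= w -> a = w ^ 3 ->
  / w / 30 <= e / 3 ->
  Rpower w 0 * exp (- (/ 12 * w)) <= e / (12 * exp 2 * Cn n) ->
  Rpower w (3 * S + 1) * exp (- (/ 8 * w)) <= e / (24 * exp 2) ->
  Rpower w (3 * S) * exp (- (r9 * w)) <= e / (24 * exp 2 * exp (r9 * N)) ->
  Rabs (I_int a b / (Rpower (6 / a) ((a - b + 1) / 2) * Gamma ((a - b + 1) / 2)) - 1) < e.
Proof.
  intros He Hc HS1 HS2 Hn HN HNa Hw Haw HW1 HW2 HW3 HW4.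
  assert (Hw0 : 0 < w) by lra.
  assert (Ha : 0 < a) by (rewrite Haw; apply pow_lt; lra).
  assert (HN0 : 0 <= N) by (rewrite HN; apply Rmax_r).
  assert (HNc : a - b - N <= -2) by (rewrite HN; generalize (Rmax_l (M+2) 0); lra).
  set (s := (a - b + 1) / 2). set (k := a / 6). set (P := / (2 * Rpower k s)).
  set (d := / w).
  assert (Hs : 0 < s) by (unfold s; lra).
  assert (HsS : s <= S) by (unfold s; lra).
  assert (Hd : 0 < d <= 1) by (unfold d; split; [apply Rinv_0_lt_compat; lra|]; 
     rewrite <- Rinv_1; apply Rinv_le_contravar; lra).
  assert (Ead4 : a * d^4 = / w) by (unfold d; rewrite Haw; field; lra).
  assert (Ead2 : a * d^2 = w) by (unfold d; rewrite Haw; field; lra).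
  assert (Ekd2 : k * d^2 / 2 = / 12 * w) by (unfold k, d; rewrite Haw; field; lra).
  assert (Einvd : / d = w) by (unfold d; rewrite Rinv_inv; reflexivity).
  assert (Hkd : 1 <= k * d^2) by (unfold k; rewrite <- Rmult_div_swap, Ead2 in *; lra).
  destruct (I_int_spec a b N Ha ltac:(lra) HN0 HNa HNc) as [l1 [l2 [H1 [H2 HI]]]].
  rewrite HI.
  assert (HG := Gamma_lb s Hs).
  set (G := Gamma s) in *.
  assert (HGp : 0 < G) by (generalize (exp_pos (-2)); lra).
  assert (HP : 0 < P) by (unfold P; apply Rinv_0_lt_compat; generalize (Rpower_pos k s); lra).
  assert (Eg : Rpower (6 / a) s * G = 2 * P * G).
  { unfold P. replace (6 / a) with (/ k) by (unfold k; field; lra).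
    rewrite Rpower_inv by (unfold k; lra). field. generalize (Rpower_pos k s); lra. }
  rewrite Eg.
  assert (Hsn : s - 1 <= INR n) by lra.
  set (T := Cn n * (2 * exp (- (k * d ^ 2 / 2)))).
  assert (HLo1 := Ff_L_lb a b N d Ha ltac:(lra) HN0 HNa Hd n l1 Hsn Hkd H1).
  assert (HLo2 := Ff_L_lb a b N d Ha ltac:(lra) HN0 HNa Hd n l2 Hsn Hkd H2).
  assert (HUp1 := Ff_L_ub a b N d Ha ltac:(lra) HN0 HNa HNc Hd l1 H1).
  assert (HUp2 := Ff_L_ub a b N d Ha ltac:(lra) HN0 HNa HNc Hd l2 H2).
  fold s k P G T in HLo1, HLo2. unfold UpB in HUp1, HUp2. fold s k P G in HUp1, HUp2.
  apply ratio_bound with (Lo := exp (- (a * d ^ 4 / 30)) * P * (G - T))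
                         (Up := exp (a * d ^ 4 / 120) * P * G + / d * exp (- (a * d ^ 2 / 8)) +
                                Rpower (9 / 10) (a - N)).
  - nra.
  - split; auto.
  - split; auto.
  -
    replace (2 * (exp (- (a * d ^ 4 / 30)) * P * (G - T)) / (2 * P * G))
      with (exp (- (a * d ^ 4 / 30)) * (1 - T / G)) by (field; lra).
    assert (HT : T / G <= e / 3).
    { unfold T. rewrite Ekd2. rewrite Rpower_O in HW2 by lra. rewrite Rmult_1_l in HW2.
      assert (HC := Cn_pos n).
      assert (/ G <= 2 * exp 2).
      { apply Rmult_le_reg_l with G; auto. rewrite Rinv_r by lra.
        assert (exp (-2) * exp 2 = 1) by (rewrite <- exp_plus; replace (-2 + 2) with 0 by ring; apply exp_0).
        assert (0 < exp 2) by apply exp_pos. nra. }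
      assert (0 < exp (- (/ 12 * w))) by apply exp_pos.
      assert (Cn n * exp (- (/ 12 * w)) <= e / (12 * exp 2)).
      { apply Rmult_le_compat_l with (r := Cn n) in HW2; [|lra].
        replace (Cn n * (e / (12 * exp 2 * Cn n))) with (e / (12 * exp 2)) in HW2 by (field; split; [lra|apply Rgt_not_eq, exp_pos]).
        exact HW2. }
      unfold Rdiv. 
      assert (0 < exp 2) by apply exp_pos.
      assert (0 <= Cn n * (2 * exp (- (/ 12 * w)))) by nra.
      apply Rle_trans with (Cn n * (2 * exp (- (/ 12 * w))) * (2 * exp 2)).
      { apply Rmult_le_compat_l; auto. }
      replace (Cn n * (2 * exp (- (/ 12 * w))) * (2 * exp 2)) with (4 * exp 2 * (Cn n * exp (- (/ 12 * w)))) by ring.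
      apply Rle_trans with (4 * exp 2 * (e / (12 * exp 2))).
      { apply Rmult_le_compat_l; [lra|auto]. }
      right. field. lra. }
    assert (HE : 1 - e / 3 <= exp (- (a * d ^ 4 / 30))).
    { eapply Rle_trans; [|apply exp_ineq1_le]. rewrite Ead4. lra. }
    assert (HE2 : exp (- (a * d ^ 4 / 30)) <= 1) by (rewrite <- exp_0; apply exp_mono; rewrite Ead4;
       assert (0 < / w) by (apply Rinv_0_lt_compat; lra); lra).
    assert (0 <= T / G).
    { unfold T. apply Rmult_le_pos; [|left; apply Rinv_0_lt_compat; auto].
      generalize (Cn_pos n) (exp_pos (- (k * d ^ 2 / 2))). nra. }
    nra.
  -
    replace (2 * (exp (a * d ^ 4 / 120) * P * G + / d * exp (- (a * d ^ 2 / 8)) + Rpower (9 / 10) (a - N)) / (2 * P * G))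
      with (exp (a * d ^ 4 / 120) + (/ d * exp (- (a * d ^ 2 / 8)) + Rpower (9 / 10) (a - N)) * / (P * G))
      by (field; lra).
    rewrite Ead4, Einvd, Ead2.
    assert (Hx1 : exp (/ w / 120) <= 1 + e / 3).
    { replace (/ w / 120) with (/ w / 30 / 4) by (field; apply Rgt_not_eq; lra).
      eapply Rle_trans. apply exp_small_ub. assert (0 < / w) by (apply Rinv_0_lt_compat; lra). lra. lra. }
    assert (HaS : Rpower a S = Rpower w (3 * S)).
    { rewrite Haw. replace 3 with (INR 3) at 1 by (simpl; ring). rewrite <- Rpower_pow by lra.
      rewrite Rpower_mult. f_equal. }
    assert (HPG : / (P * G) <= 4 * exp 2 * Rpower w (3 * S)).
    { rewrite <- HaS.
      assert (Hk1 : 1 <= k).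
      { unfold k. rewrite Haw. assert (36 <= w^2) by nra. assert (216 <= w^3) by (simpl; nra). lra. }
      assert (HkS : Rpower k s <= Rpower a S).
      { apply Rle_trans with (Rpower k S). apply Rle_Rpower; lra.
        apply Rle_Rpower_l; [lra|]. unfold k; lra. }
      rewrite Rinv_mult. unfold P. rewrite Rinv_inv.
      assert (/ G <= 2 * exp 2).
      { apply Rmult_le_reg_l with G; auto. rewrite Rinv_r by lra.
        assert (exp (-2) * exp 2 = 1) by (rewrite <- exp_plus; replace (-2 + 2) with 0 by ring; apply exp_0).
        assert (0 < exp 2) by apply exp_pos. nra. }
      assert (0 < Rpower k s) by apply Rpower_pos.
      assert (0 < / G) by (apply Rinv_0_lt_compat; auto).
      nra. }
    assert (Hq1 : w * exp (- (w / 8)) * (4 * exp 2 * Rpower w (3 * S)) <= e / 6).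
    { replace (w * exp (- (w / 8)) * (4 * exp 2 * Rpower w (3 * S)))
        with (4 * exp 2 * (Rpower w (3 * S + 1) * exp (- (/ 8 * w)))).
      2: { rewrite Rpower_plus, Rpower_1 by lra. replace (w / 8) with (/ 8 * w) by field. ring. }
      apply Rle_trans with (4 * exp 2 * (e / (24 * exp 2))).
      apply Rmult_le_compat_l; [generalize (exp_pos 2); lra|auto].
      right. field. apply Rgt_not_eq, exp_pos. }
    assert (Hq2 : Rpower (9 / 10) (a - N) * (4 * exp 2 * Rpower w (3 * S)) <= e / 6).
    { rewrite R9_bound.
      assert (Haw1 : w <= a) by (rewrite Haw; simpl; nra).
      assert (exp (- (r9 * a)) <= exp (- (r9 * w))) by (apply exp_mono; generalize r9_pos; nra).
      assert (0 < Rpower w (3 * S)) by apply Rpower_pos.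
      assert (0 < exp (r9 * N)) by apply exp_pos. assert (0 < exp 2) by apply exp_pos.
      apply Rle_trans with (4 * exp 2 * exp (r9 * N) * (Rpower w (3 * S) * exp (- (r9 * w)))).
      { replace (exp (r9 * N) * exp (- (r9 * a)) * (4 * exp 2 * Rpower w (3 * S)))
          with (4 * exp 2 * exp (r9 * N) * (Rpower w (3 * S) * exp (- (r9 * a)))) by ring.
        apply Rmult_le_compat_l; [nra|]. apply Rmult_le_compat_l; lra. }
      apply Rle_trans with (4 * exp 2 * exp (r9 * N) * (e / (24 * exp 2 * exp (r9 * N)))).
      { apply Rmult_le_compat_l; [nra|auto]. }
      right. field. lra. }
    assert (0 <= / (P * G)) by (left; apply Rinv_0_lt_compat; nra).
    assert (0 <= w * exp (- (w / 8)) + Rpower (9 / 10) (a - N)).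
    { generalize (exp_pos (- (w / 8))) (Rpower_pos (9/10) (a - N)). nra. }
    assert ((w * exp (- (w / 8)) + Rpower (9 / 10) (a - N)) * / (P * G) <=
            (w * exp (- (w / 8)) + Rpower (9 / 10) (a - N)) * (4 * exp 2 * Rpower w (3 * S))).
    { apply Rmult_le_compat_l; auto. }
    lra.
Qed.

Lemma Rpower_cube_root x : 0 < x -> Rpower (Rpower x (/ 3)) 3 = x.
Proof. intros H. rewrite Rpower_mult. replace (/ 3 * 3) with 1 by field. apply Rpower_1; auto. Qed.

Lemma part1 (beta : R -> R) (M : R) :
  (exists A, forall alpha, A < alpha -> -1 < alpha - beta alpha /\ alpha - beta alpha <= M) ->
  equiv_at_infty
    (fun alpha => I_int alpha (beta alpha))
    (fun alpha => Rpower (6 / alpha) ((alpha - beta alpha + 1) / 2)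
                  * Gamma ((alpha - beta alpha + 1) / 2)).
Proof.
  intros [A0 HA] eps Heps.
  set (e := Rmin eps 1).
  assert (He : 0 < e <= 1) by (unfold e; split; [apply Rmin_glb_lt; lra | apply Rmin_r]).
  assert (Hee : e <= eps) by apply Rmin_l.
  set (S := Rmax ((M + 1) / 2) 1).
  assert (HS1 : (M + 1) / 2 <= S) by apply Rmax_l.
  assert (HS2 : 1 <= S) by apply Rmax_r.
  destruct (nat_above (S - 1)) as [n Hn].
  set (N := Rmax (M + 2) 0).
  assert (HN0 : 0 <= N) by apply Rmax_r.
  assert (Hexp2 : 0 < exp 2) by apply exp_pos.
  assert (HC := Cn_pos n).
  assert (HK9 : 0 < exp (r9 * N)) by apply exp_pos.
  destruct (poly_exp_lim 0 (/ 12) (e / (12 * exp 2 * Cn n))) as [W2 [HW2a HW2]].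
  { lra. } { apply Rdiv_lt_0_compat; [lra|]. nra. }
  destruct (poly_exp_lim (3 * S + 1) (/ 8) (e / (24 * exp 2))) as [W3 [HW3a HW3]].
  { lra. } { apply Rdiv_lt_0_compat; lra. }
  destruct (poly_exp_lim (3 * S) r9 (e / (24 * exp 2 * exp (r9 * N)))) as [W4 [HW4a HW4]].
  { apply r9_pos. } { apply Rdiv_lt_0_compat; [lra|]. nra. }
  set (W := Rmax 6 (Rmax (/ e) (Rmax W2 (Rmax W3 W4)))).
  assert (HW6 : 6 <= W) by apply Rmax_l.
  assert (HWe : / e <= W) by (unfold W; eapply Rle_trans; [|apply Rmax_r]; apply Rmax_l).
  assert (HW2' : W2 <= W) by (unfold W; eapply Rle_trans; [|apply Rmax_r];
                              eapply Rle_trans; [|apply Rmax_r]; apply Rmax_l).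
  assert (HW3' : W3 <= W) by (unfold W; eapply Rle_trans; [|apply Rmax_r];
                              eapply Rle_trans; [|apply Rmax_r];
                              eapply Rle_trans; [|apply Rmax_r]; apply Rmax_l).
  assert (HW4' : W4 <= W) by (unfold W; eapply Rle_trans; [|apply Rmax_r];
                              eapply Rle_trans; [|apply Rmax_r];
                              eapply Rle_trans; [|apply Rmax_r]; apply Rmax_r).
  exists (Rmax A0 (Rmax N (W ^ 3))).
  intros a Ha.
  assert (HaA0 : A0 < a) by (generalize (Rmax_l A0 (Rmax N (W^3))); lra).
  assert (HaN : N <= a) by (generalize (Rmax_r A0 (Rmax N (W^3))) (Rmax_l N (W^3)); lra).
  assert (HaW : W ^ 3 <= a) by (generalize (Rmax_r A0 (Rmax N (W^3))) (Rmax_r N (W^3)); lra).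
  assert (HW3pos : 0 < W ^ 3) by (apply pow_lt; lra).
  assert (Ha0 : 0 < a) by lra.
  set (w := Rpower a (/ 3)).
  assert (Haw : a = w ^ 3).
  { unfold w. rewrite <- Rpower_pow by apply Rpower_pos. simpl INR.
    replace (1 + 1 + 1) with 3 by ring. rewrite Rpower_cube_root; auto. }
  assert (Hw : W <= w).
  { unfold w. replace W with (Rpower (W ^ 3) (/ 3)).
    - apply Rle_Rpower_l; [lra|]. split; auto.
    - rewrite <- Rpower_pow by lra. simpl INR. replace (1 + 1 + 1) with 3 by ring.
      rewrite Rpower_mult. replace (3 * / 3) with 1 by field. apply Rpower_1; lra. }
  destruct (HA a HaA0) as [Hc1 Hc2].
  eapply Rlt_le_trans; [|exact Hee].
  apply (core a (beta a) M S n N e w); auto; try lra.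
  - unfold Rdiv. apply Rle_trans with (/ W * / 30).
    + apply Rmult_le_compat_r; [lra|]. apply Rinv_le_contravar; lra.
    + assert (/ W <= e).
      { replace e with (/ / e) by (field; lra). apply Rinv_le_contravar; auto.
        apply Rinv_0_lt_compat; lra. }
      lra.
  - apply HW2; lra.
  - apply HW3; lra.
  - apply HW4; lra.
Qed.

Theorem mainTheorem6 :
  (forall (beta : R -> R) (M : R),
     (exists A, forall alpha, A < alpha ->
        -1 < alpha - beta alpha /\ alpha - beta alpha <= M) ->
     equiv_at_infty
       (fun alpha => I_int alpha (beta alpha))
       (fun alpha => Rpower (6 / alpha) ((alpha - beta alpha + 1) / 2)
                     * Gamma ((alpha - beta alpha + 1) / 2)))
  /\
  equiv_at_infty
    (fun alpha => I_int alpha (IZR (Int_part alpha)))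
    (fun alpha => Rpower (6 / alpha) ((alpha - IZR (Int_part alpha) + 1) / 2)
                  * Gamma ((alpha - IZR (Int_part alpha) + 1) / 2)).
Proof.
  split.
  - exact part1.
  - apply (part1 (fun alpha => IZR (Int_part alpha)) 1).
    exists 0. intros alpha _. destruct (base_Int_part alpha) as [H1 H2]. lra.
Qed.
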